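(* Let $\mathcal S=\{1,\dots,S\}$ be a finite state space, let $X=(X_t)_{t\in\mathbb N}$ be a discrete-time process with values in $\mathcal S$, and let $\boldsymbol Z$ be a random covariate vector (not depending on $t$) with support $\mathcal Z$. Assume: (i) for every $\boldsymbol z\in\mathcal Z$, conditionally on $\boldsymbol Z=\boldsymbol z$, $X$ is a homogeneous, irreducible and aperiodic Markov chain of order 1 with transition probabilities $p_{ij}(\boldsymbol z)=\mathbb P(X_{t+1}=j\mid X_t=i,\boldsymbol Z=\boldsymbol z)$ for all $t\in\mathbb N$, $i,j\in\mathcal S$, and transition matrix $\boldsymbol P(\boldsymbol z)=(p_{ij}(\boldsymbol z))_{i,j}$; (ii) $T_0$ is not random, and $0\le T_0<T_1<T_2<\cdots$ are integer observation times with gaps $\tau_k=T_k-T_{k-1}\in\mathbb N^*$, $k\ge1$; set $Y_k=X_{T_k}$; (iii) the sequence $(\tau_k)_{k\ge1}$ is conditionally independent of $X$ given $\boldsymbol Z$; (iv) for every $\boldsymbol z\in\mathcal Z$, the positive integer-valued variables $\tau_k$, $k\ge1$, are conditionally independent and have the same conditional distribution given $\boldsymbol Z=\boldsymbol z$. Then: (a) for every integer $k\ge1$, $\boldsymbol z\in\mathcal Z$, $i_{k-1},\dots,i_1\in\mathcal S$, $\ell'_k,\dots,\ell'_1\in\mathbb N^*$, and all $i,j\in\mathcal S$, $\ell\in\mathbb N^*$, $$\mathbb P(Y_{k+1}=j,\tau_{k+1}=\ell\mid Y_k=i,\tau_k=\ell'_k,Y_{k-1}=i_{k-1},\tau_{k-1}=\ell'_{k-1},\dots,Y_1=i_1,\tau_1=\ell'_1,\boldsymbol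 Z=\boldsymbol z)=\mathbb P(Y_{k+1}=j,\tau_{k+1}=\ell\mid Y_k=i,\boldsymbol Z=\boldsymbol z);$$ (b) for every $\boldsymbol z\in\mathcal Z$, all integers $t<t'$, all $k\in\mathbb N$ and $i,j\in\mathcal S$, $$\mathbb P(X_{T_{k+1}}=j\mid X_{T_k}=i,T_{k+1}=t',T_k=t,\boldsymbol Z=\boldsymbol z)=\big(\boldsymbol P^{t'-t}(\boldsymbol z)\big)_{ij};$$ (c) for every $\boldsymbol z\in\mathcal Z$, the conditional distribution of $\tau_{k+1}$ given $Y_k$ and $\boldsymbol Z=\boldsymbol z$ is the same for all $k\in\mathbb N$.
   Context: $\boldsymbol P^{m}(\boldsymbol z)$ denotes the $m$-th matrix power of $\boldsymbol P(\boldsymbol z)$. Conditional probabilities given $\boldsymbol Z=\boldsymbol z$ are understood for $\boldsymbol z$ in the support of $\boldsymbol Z$. *)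

(* Defs.v *)
From HB Require Import structures.
From mathcomp Require Import all_boot all_order all_algebra.
From mathcomp Require Import all_classical all_reals all_analysis.
Set Implicit Arguments. Unset Strict Implicit. Unset Printing Implicit Defensive.
Import Order.TTheory GRing.Theory Num.Theory.
Local Open Scope classical_set_scope.
Local Open Scope ring_scope.

Section Defs.
Context {R : realType} {d : measure_display} {Omega : measurableType d}.

Definition Pr (mu : probability Omega R) (A : set Omega) : R := fine (mu A).

(* elementary conditional probability P(A | B) = P(A /\ B) / P(B)
   (only used when P(B) > 0) *)
Definition cprob (mu : probability Omega R) (A B : set Omega) : R :=
  Pr mu (A `&` B) / Pr mu B.

Definition stochastic_mx (N : nat) (M : 'M[R]_N.+1) : Prop :=
  (forall i j, 0 <= M i j) /\ (forall i, \sum_j M i j = 1).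

Definition irreducible_mx (N : nat) (M : 'M[R]_N.+1) : Prop :=
  forall i j, exists m : nat, 0 < (M ^+ m) i j.

(* aperiodic: for every state i, gcd {m >= 1 | (M^m)_{ii} > 0} = 1 *)
Definition aperiodic_mx (N : nat) (M : 'M[R]_N.+1) : Prop :=
  forall i (q : nat),
    (forall m : nat, (0 < m)%N -> 0 < (M ^+ m) i i -> (q %| m)%N) -> q = 1%N.

Definition hom_markov_chain (N : nat) (mu : probability Omega R)
  (X : nat -> Omega -> 'I_N.+1) (M : 'M[R]_N.+1) : Prop :=
  stochastic_mx M /\
  (forall (t : nat) (i j : 'I_N.+1),
     0 < Pr mu [set w | X t w = i] ->
     cprob mu [set w | X t.+1 w = j] [set w | X t w = i] = M i j) /\
  (forall (t : nat) (h : nat -> 'I_N.+1) (i j : 'I_N.+1),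
     0 < Pr mu [set w | X t w = i /\ forall s, (s < t)%N -> X s w = h s] ->
     cprob mu [set w | X t.+1 w = j]
              [set w | X t w = i /\ forall s, (s < t)%N -> X s w = h s]
     = cprob mu [set w | X t.+1 w = j] [set w | X t w = i]).

Definition gap (T : nat -> Omega -> nat) (k : nat) (w : Omega) : nat :=
  (T k w - T k.-1 w)%N.

Definition obs (N : nat) (X : nat -> Omega -> 'I_N.+1) (T : nat -> Omega -> nat)
  (k : nat) (w : Omega) : 'I_N.+1 := X (T k w) w.

Definition indep_gaps_process (N : nat) (mu : probability Omega R)
  (X : nat -> Omega -> 'I_N.+1) (tau : nat -> Omega -> nat) : Prop :=
  forall (ts ks : seq nat) (h : nat -> 'I_N.+1) (l : nat -> nat),
    all (fun k => (0 < k)%N) ks ->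
    Pr mu [set w | (forall t, t \in ts -> X t w = h t) /\
                   (forall k, k \in ks -> tau k w = l k)]
    = Pr mu [set w | forall t, t \in ts -> X t w = h t] *
      Pr mu [set w | forall k, k \in ks -> tau k w = l k].

Definition mutually_indep_gaps (mu : probability Omega R)
  (tau : nat -> Omega -> nat) : Prop :=
  forall (ks : seq nat) (l : nat -> nat),
    uniq ks -> all (fun k => (0 < k)%N) ks ->
    Pr mu [set w | forall k, k \in ks -> tau k w = l k]
    = \prod_(k <- ks) Pr mu [set w | tau k w = l k].

Definition ident_distr_gaps (mu : probability Omega R)
  (tau : nat -> Omega -> nat) : Prop :=
  forall (k l : nat), (0 < k)%N ->
    Pr mu [set w | tau k w = l] = Pr mu [set w | tau 1%N w = l].

End Defs.

(* Main.v *)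
Require Import Defs.
From HB Require Import structures.
From mathcomp Require Import all_boot all_order all_algebra.
From mathcomp Require Import all_classical all_reals all_analysis.
Import Order.TTheory GRing.Theory Num.Theory.
Local Open Scope classical_set_scope.
Local Open Scope ring_scope.

Section Base.
Context {R : realType} {d : measure_display} {Omega : measurableType d}.
Context (mu : probability Omega R).

Lemma mu_fin A : measurable A -> mu A \is a fin_num.
Proof.
move=> mA; rewrite ge0_fin_numE ?measure_ge0 //.
exact: (le_lt_trans (probability_le1 mu mA) (ltey _)).
Qed.

Lemma PrE A : measurable A -> mu A = (Pr mu A)%:E.
Proof. by move=> mA; rewrite /Pr fineK // mu_fin. Qed.

Lemma Pr_ge0 A : 0 <= Pr mu A.
Proof. exact: fine_ge0 (measure_ge0 _ _). Qed.

Lemma Pr_le A B : measurable A -> measurable B -> A `<=` B -> Pr mu A <= Pr mu B.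
Proof.
move=> mA mB AB; apply: fine_le; rewrite ?inE ?mu_fin //.
by apply: le_measure; rewrite ?inE.
Qed.

Lemma Pr0 : Pr mu set0 = 0.
Proof. by rewrite /Pr measure0. Qed.

Lemma Pr_lift (K : countType) (f : Omega -> K) (A B : set Omega) (c : R) :
  0 <= c ->
  (forall x, measurable (A `&` [set w | f w = x])) ->
  (forall x, measurable (B `&` [set w | f w = x])) ->
  (forall x, Pr mu (A `&` [set w | f w = x]) = c * Pr mu (B `&` [set w | f w = x])) ->
  Pr mu A = c * Pr mu B.
Proof.
move=> c0 mA mB eAB.
pose F (C : set Omega) m := C `&` [set w | pickle (f w) = m].
have FE C m : F C m = match pickle_inv m with Some x => C `&` [set w | f w = x] | None => set0 end.
  rewrite /F; apply/seteqP; split => w /=.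
    by case=> Cw <-; rewrite pickleK_inv.
  case E: (pickle_inv m) => [x|] //= [Cw fx].
  by split=> //; rewrite fx -(@pickle_invK K m) E.
have mF C : (forall x, measurable (C `&` [set w | f w = x])) -> forall m, measurable (F C m).
  by move=> mC m; rewrite FE; case: (pickle_inv m).
have UF C : C = \bigcup_(m in setT) F C m.
  apply/seteqP; split => w /=; first by move=> Cw; exists (pickle (f w)).
  by case=> m _ [].
have tF C : trivIset setT (F C).
  by move=> i j _ _ [w [[_ <-] [_ <-]]].
have mU C : (forall x, measurable (C `&` [set w | f w = x])) -> measurable C.
  by move=> mC; rewrite (UF C); apply: bigcup_measurable => m _; apply: mF.
suff h : mu A = (c%:E * mu B)%E by rewrite /Pr h fineM // mu_fin //; exact: mU.
have -> : mu A = (\sum_(0 <= m <oo | m \in setT) mu (F A m))%E.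
  by rewrite {1}(UF A) measure_bigcup //; move=> m _; apply: mF.
have -> : mu B = (\sum_(0 <= m <oo | m \in setT) mu (F B m))%E.
  by rewrite {1}(UF B) measure_bigcup //; move=> m _; apply: mF.
have eq m : mu (F A m) = (c%:E * mu (F B m))%E.
  rewrite !FE; case: (pickle_inv m) => [x|]; last by rewrite measure0 mule0.
  by rewrite !PrE // eAB.
by rewrite (eq_eseriesr (fun m _ => eq m)) nneseriesZl //.
Qed.
Lemma Pr_part (n : nat) (g : Omega -> 'I_n) A :
  (forall i, measurable (A `&` [set w | g w = i])) ->
  Pr mu A = \sum_(i < n) Pr mu (A `&` [set w | g w = i]).
Proof.
move=> mA.
have eqA : A = \big[setU/set0]_(i < n) (A `&` [set w | g w = i]).
  apply/seteqP; split => w.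
    by move=> Aw; rewrite (bigD1 (g w)) //=; left.
  by elim/big_rec: _ => // i S _ IH [[]|].
rewrite {1}/Pr {1}eqA measure_bigsetU_ord //; last by move=> i j _ _ [w [[_ <-] [_ <-]]].
rewrite (eq_bigr (fun i => (Pr mu (A `&` [set w | g w = i]))%:E)); last by move=> i _; rewrite -PrE.
by rewrite sumEFin.
Qed.
End Base.

Local Open Scope classical_set_scope.
Local Open Scope ring_scope.

Section Markov.
Context {R : realType} {d : measure_display} {Omega : measurableType d}.
Context (mu : probability Omega R) (N : nat) (X : nat -> Omega -> 'I_N.+1) (M : 'M[R]_N.+1).
Context (measX : forall t i, measurable [set w | X t w = i]) (hMC : hom_markov_chain mu X M).

Definition Ev (cs : seq (nat * 'I_N.+1)) := [set w | forall p, p \in cs -> X p.1 w = p.2].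

Lemma EvC p cs : Ev (p :: cs) = [set w | X p.1 w = p.2] `&` Ev cs.
Proof.
apply/seteqP; split => w /=.
  move=> H; split; first by apply: H; rewrite mem_head.
  by move=> q qin; apply: H; rewrite in_cons qin orbT.
by move=> [h1 h2] q; rewrite in_cons => /orP [/eqP -> //|]; exact: h2.
Qed.

Lemma mEv cs : measurable (Ev cs).
Proof.
elim: cs => [|p cs IH].
  have -> : Ev [::] = setT by apply/seteqP; split.
  exact: measurableT.
by rewrite EvC; exact: measurableI.
Qed.

Lemma mfib ts x : measurable [set w | map (fun s => X s w) ts = x].
Proof.
elim: ts x => [|t ts IH] [|y x] /=.
- have -> : [set w : Omega | [::] = [::] :> seq 'I_N.+1] = setT by apply/seteqP; split.
  exact: measurableT.
- have -> : [set w : Omega | [::] = y :: x] = set0 by apply/seteqP; split => w //=.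
  exact: measurable0.
- have -> : [set w | X t w :: map (fun s => X s w) ts = [::]] = set0 by apply/seteqP; split => w //=.
  exact: measurable0.
- have -> : [set w | X t w :: map (fun s => X s w) ts = y :: x] =
            [set w | X t w = y] `&` [set w | map (fun s => X s w) ts = x].
    by apply/seteqP; split => w /=; [case=> -> -> | case=> -> ->].
  exact: measurableI.
Qed.

Lemma HE u a (h : nat -> 'I_N.+1) :
  [set w | X u w = a /\ forall s, (s < u)%N -> X s w = h s] =
  Ev ((u,a) :: [seq (s, h s) | s <- iota 0 u]).
Proof.
apply/seteqP; split=> w /=.
  case=> Xu Hs p; rewrite in_cons => /orP[/eqP -> // | /mapP [s]].
  by rewrite mem_iota add0n => /andP[_ slt] -> /=; exact: Hs.
move=> H; split; first by apply: (H (u,a)); rewrite mem_head.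
move=> s slt; apply: (H (s, h s)); rewrite in_cons; apply/orP; right.
by apply/mapP; exists s => //; rewrite mem_iota add0n slt.
Qed.

Lemma step_H u a j h :
  Pr mu ([set w | X u.+1 w = j] `&` [set w | X u w = a /\ forall s, (s < u)%N -> X s w = h s])
  = M a j * Pr mu [set w | X u w = a /\ forall s, (s < u)%N -> X s w = h s].
Proof.
set H := [set w | X u w = a /\ _].
have mH : measurable H by rewrite /H HE; exact: mEv.
have mXu := measX u.+1 j.
case: hMC => [[Mge0 _] [h1 h2]].
have [Hpos|Hle] := ltrP 0 (Pr mu H).
  have Hpa : 0 < Pr mu [set w | X u w = a].
    apply: lt_le_trans Hpos _; apply: Pr_le => //; last by move=> w [].
  move: (h2 u h a j Hpos); rewrite h1 // /cprob => E.
  by rewrite -E divfK // gt_eqF.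
have H0 : Pr mu H = 0 by apply/eqP; rewrite eq_le Hle Pr_ge0.
rewrite H0 mulr0; apply/eqP; rewrite eq_le Pr_ge0 andbT -H0.
by apply: Pr_le => //; exact: measurableI.
Qed.

Lemma onestep u a j cs : (u,a) \in cs -> all (fun p => p.1 <= u)%N cs ->
  Pr mu (Ev ((u.+1,j)::cs)) = Pr mu (Ev cs) * M a j.
Proof.
move=> uin cle; rewrite mulrC.
have Mge0 : 0 <= M a j by case: hMC => [[]].
apply: (@Pr_lift _ _ _ mu _ (fun w => map (fun s => X s w) (iota 0 u))) => //.
- by move=> x; apply: measurableI; [exact: mEv | exact: mfib].
- by move=> x; apply: measurableI; [exact: mEv | exact: mfib].
move=> x.
case: (eqVneq (size x) u) => [sx|sx]; last first.
  have -> : [set w | map (fun s => X s w) (iota 0 u) = x] = set0.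
    apply/seteqP; split => w //= E; move: sx; by rewrite -E size_map size_iota eqxx.
  by rewrite !setI0 Pr0 mulr0.
pose g s := if (s < u)%N then nth a x s else a.
set F := [set w | _ = x].
have Xg w : F w -> X u w = a -> forall s, (s <= u)%N -> X s w = g s.
  move=> fw Xu s; rewrite /g; case: ltnP => [slt _ | sge sle].
    by rewrite -fw (nth_map 0%N) ?size_iota // nth_iota // add0n.
  by have -> : s = u by apply/eqP; rewrite eqn_leq sle sge.
rewrite EvC -setIA.
have [hall|hall] := boolP (all (fun p => g p.1 == p.2) cs).
  have -> : Ev cs `&` F = [set w | X u w = a /\ forall s, (s < u)%N -> X s w = g s].
    apply/seteqP; split => w.
      move=> [Ew fw]; have Xu : X u w = a := Ew (u,a) uin.
      by split => // s slt; exact: Xg fw Xu s (ltnW slt).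
    move=> [Xu Hs].
    have Xg' s : (s <= u)%N -> X s w = g s.
      by rewrite leq_eqVlt => /orP[/eqP -> | ]; [rewrite /g ltnn | exact: Hs].
    split.
      move=> p pin; move: (allP hall p pin) => /eqP <-; apply: Xg'.
      exact: (allP cle p pin).
    rewrite /F /=; apply: (@eq_from_nth _ a); first by rewrite size_map size_iota sx.
    move=> s; rewrite size_map size_iota => slt.
    by rewrite (nth_map 0%N) ?size_iota // nth_iota // add0n Hs // /g slt.
  exact: step_H.
have -> : Ev cs `&` F = set0.
  apply/seteqP; split => w // [Ew fw]; have Xu := Ew _ uin.
  move: hall => /negP; apply; apply/allP => p pin; apply/eqP.
  by rewrite -(Ew p pin) (Xg w fw Xu p.1 (allP cle p pin)).
by rewrite setI0 Pr0 mulr0.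
Qed.

Lemma multistep t i j n cs : (t,i) \in cs -> all (fun p => p.1 <= t)%N cs ->
  Pr mu (Ev (((t + n)%N, j)::cs)) = Pr mu (Ev cs) * (M ^+ n) i j.
Proof.
move=> tin cle; elim: n j => [|n IH] j.
  rewrite addn0 expr0 mxE.
  case: (eqVneq i j) => [<-|ne].
    rewrite mulr1; congr Pr; apply/seteqP; split => w.
      by move=> H p pin; apply: H; rewrite in_cons pin orbT.
    move=> H p; rewrite in_cons => /orP[/eqP -> /=|]; last exact: H.
    exact: (H _ tin).
  rewrite mulr0 -(Pr0 mu); congr Pr; apply/seteqP; split => w // H.
  have tin2 : (t, i) \in (t, j) :: cs by rewrite in_cons tin orbT.
  move: (H _ tin2) (H _ (mem_head (t,j) cs)) => /= Hi Hj.
  by move: ne; rewrite -Hi -Hj eqxx.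
rewrite (@Pr_part _ _ _ mu _ (X (t + n)%N)); last first.
  by move=> a; apply: measurableI; [exact: mEv | exact: measX].
rewrite exprSr; under eq_bigr => a _.
  have -> : Ev (((t + n.+1)%N, j) :: cs) `&` [set w | X (t + n)%N w = a] =
            Ev (((t + n)%N.+1, j) :: ((t + n)%N, a) :: cs).
    by rewrite !EvC addnS -setIA [Ev cs `&` _]setIC.
  rewrite (@onestep (t + n)%N a j) ?mem_head //; last first.
    rewrite /= leqnn /=; apply/allP => p pin; apply: leq_trans (allP cle p pin) _.
    exact: leq_addr.
  rewrite IH.
  over.
rewrite mxE mulr_sumr; apply: eq_bigr => a _; by rewrite mulrA.
Qed.

End Markov.

Local Open Scope classical_set_scope.
Local Open Scope ring_scope.

Section Meas.
Context {d : measure_display} {Omega : measurableType d}.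

Lemma mnat2 (f g : Omega -> nat) (P : nat -> nat -> Prop) :
  (forall a, measurable [set w | f w = a]) -> (forall b, measurable [set w | g w = b]) ->
  measurable [set w | P (f w) (g w)].
Proof.
move=> mf mg.
have -> : [set w | P (f w) (g w)] = \bigcup_(a in setT) \bigcup_(b in setT)
   (if pselect (P a b) then [set w | f w = a] `&` [set w | g w = b] else set0).
  apply/seteqP; split => w /=.
    move=> H; exists (f w) => //; exists (g w) => //.
    by case: pselect.
  case=> a _ [b _]; by case: pselect => //= Pab [-> ->].
apply: bigcup_measurable => a _; apply: bigcup_measurable => b _.
by case: pselect => Pab; [exact: measurableI | exact: measurable0].
Qed.

Lemma mcomp (K : eqType) (Y : nat -> Omega -> K) (f : Omega -> nat) (y : K) :
  (forall t, measurable [set w | Y t w = y]) -> (forall a, measurable [set w | f w = a]) ->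
  measurable [set w | Y (f w) w = y].
Proof.
move=> mY mf.
have -> : [set w | Y (f w) w = y] = \bigcup_(t in setT) ([set w | f w = t] `&` [set w | Y t w = y]).
  apply/seteqP; split => w /=; first by move=> H; exists (f w).
  by case=> t _ [<-].
by apply: bigcup_measurable => t _; exact: measurableI.
Qed.

Lemma mfibG (K : eqType) (Y : nat -> Omega -> K) ts x :
  (forall t y, measurable [set w | Y t w = y]) ->
  measurable [set w | map (fun s => Y s w) ts = x].
Proof.
move=> mY; elim: ts x => [|t ts IH] [|y x] /=.
- have -> : [set w : Omega | [::] = [::] :> seq K] = setT by apply/seteqP; split.
  exact: measurableT.
- have -> : [set w : Omega | [::] = y :: x] = set0 by apply/seteqP; split => w //=.
  exact: measurable0.
- have -> : [set w | Y t w :: map (fun s => Y s w) ts = [::]] = set0 by apply/seteqP; split => w //=.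
  exact: measurable0.
- have -> : [set w | Y t w :: map (fun s => Y s w) ts = y :: x] =
            [set w | Y t w = y] `&` [set w | map (fun s => Y s w) ts = x].
    by apply/seteqP; split => w /=; [case=> -> -> | case=> -> ->].
  exact: measurableI.
Qed.

End Meas.

Definition Tau {d : measure_display} {Omega : measurableType d} (T : nat -> Omega -> nat) (ks : seq nat) (l : nat -> nat) :=
  [set w | forall k, k \in ks -> gap T k w = l k].
Definition G {d : measure_display} {Omega : measurableType d} (T : nat -> Omega -> nat) k w := map (fun m => gap T m w) (iota 1 k).
Definition lx (x : seq nat) m := nth 0%N x m.-1.
Definition sT t0 (l0 : nat -> nat) m := (t0 + \sum_(1 <= n < m.+1) l0 n)%N.
Definition upd (l0 : nat -> nat) k v m := if m == k then v else l0 m.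

Section Gaps.
Context {d : measure_display} {Omega : measurableType d}.
Context (T : nat -> Omega -> nat) (t0 : nat)
  (measT : forall k t, measurable [set w | T k w = t])
  (hT0 : forall w, T 0%N w = t0)
  (hTinc : forall k w, (T k w < T k.+1 w)%N).

Lemma mgap k v : measurable [set w | gap T k w = v].
Proof. exact: (@mnat2 _ _ (T k) (T k.-1) (fun a b => (a - b)%N = v)). Qed.

Lemma mTau ks l : measurable (Tau T ks l).
Proof.
elim: ks => [|k ks IH].
  have -> : Tau T [::] l = setT by apply/seteqP; split.
  exact: measurableT.
have -> : Tau T (k :: ks) l = [set w | gap T k w = l k] `&` Tau T ks l.
  apply/seteqP; split => w /=.
    move=> H; split; first by apply: H; rewrite mem_head.
    by move=> q qin; apply: H; rewrite in_cons qin orbT.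
  by move=> [h1 h2] q; rewrite in_cons => /orP [/eqP -> //|]; exact: h2.
exact: measurableI (mgap _ _) IH.
Qed.

Lemma mG k x : measurable [set w | G T k w = x].
Proof. by apply: (@mfibG _ _ _ (fun m w => gap T m w)) => t y; exact: mgap. Qed.

Lemma TS k w : T k.+1 w = (T k w + gap T k.+1 w)%N.
Proof. by rewrite /gap /= subnKC // ltnW. Qed.

Lemma Tsum m w : T m w = sT t0 (fun n => gap T n w) m.
Proof.
rewrite /sT; elim: m => [|m IH]; first by rewrite big_geq // addn0 hT0.
by rewrite big_nat_recr //= addnA -IH -TS.
Qed.

Lemma TauT k l0 w m : Tau T (iota 1 k) l0 w -> (m <= k)%N -> T m w = sT t0 l0 m.
Proof.
move=> H mk; rewrite Tsum /sT; congr addn; apply: eq_big_nat => n /andP[n1 nm].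
by apply: H; rewrite mem_iota n1 add1n (leq_trans nm).
Qed.

Lemma fib_nil k x : size x != k -> [set w | G T k w = x] = set0.
Proof.
move=> sx; apply/seteqP; split => w //= E; move: sx.
by rewrite -E size_map size_iota eqxx.
Qed.

Lemma fib_tau k x : size x = k -> [set w | G T k w = x] = Tau T (iota 1 k) (lx x).
Proof.
move=> sx; apply/seteqP; split => w /=.
  move=> E m; rewrite mem_iota => /andP[m1 mk].
  rewrite /lx -E (nth_map 0%N); last by rewrite size_iota -ltnS -add1n prednK.
  by rewrite nth_iota ?add1n ?prednK // -ltnS -add1n prednK.
move=> H; apply: (@eq_from_nth _ 0%N); first by rewrite size_map size_iota sx.
move=> r; rewrite size_map size_iota => rk.
rewrite (nth_map 0%N) ?size_iota // nth_iota // H; last by rewrite mem_iota leq_addr /= ltn_add2l.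
by rewrite /lx add1n.
Qed.

Lemma TauS k l0 v w : k.+1 \notin iota 1 k ->
  Tau T (k.+1 :: iota 1 k) (upd l0 k.+1 v) w <-> (gap T k.+1 w = v /\ Tau T (iota 1 k) l0 w).
Proof.
move=> kn; split.
  move=> H; split; first by rewrite (H k.+1) ?mem_head // /upd eqxx.
  move=> m min; rewrite (H m); last by rewrite in_cons min orbT.
  rewrite /upd; case: eqP => // mk; by move: kn; rewrite -mk min.
move=> [H1 H2] m; rewrite in_cons => /orP[/eqP ->|min]; first by rewrite /upd eqxx.
rewrite H2 // /upd; case: eqP => // mk; by move: kn; rewrite -mk min.
Qed.

Lemma notin_iota k : k.+1 \notin iota 1 k.
Proof. by rewrite mem_iota add1n ltnn andbF. Qed.

Lemma sT_mono l0 m m' : (m <= m')%N -> (sT t0 l0 m <= sT t0 l0 m')%N.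
Proof.
apply: (homo_leq (r := leq)) => //; first exact: leq_trans.
by move=> n; rewrite /sT [X in (_ <= _ + X)%N]big_nat_recr //= addnA leq_addr.
Qed.

End Gaps.

Local Open Scope classical_set_scope.
Local Open Scope ring_scope.

Section Indep.
Context {R : realType} {d : measure_display} {Omega : measurableType d}.
Context (mu : probability Omega R) (N : nat) (X : nat -> Omega -> 'I_N.+1) (M : 'M[R]_N.+1)
  (T : nat -> Omega -> nat) (t0 : nat)
  (measX : forall t i, measurable [set w | X t w = i])
  (measT : forall k t, measurable [set w | T k w = t])
  (hMC : hom_markov_chain mu X M)
  (hT0 : forall w, T 0%N w = t0)
  (hTinc : forall k w, (T k w < T k.+1 w)%N)
  (hindX : indep_gaps_process mu X (gap T))
  (hindtau : mutually_indep_gaps mu (gap T))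
  (hidtau : ident_distr_gaps mu (gap T)).

Lemma indepEv cs ks l : all (fun k => 0 < k)%N ks ->
  Pr mu (Ev N X cs `&` Tau T ks l) = Pr mu (Ev N X cs) * Pr mu (Tau T ks l).
Proof.
move=> kpos.
case: (pselect (exists g : nat -> 'I_N.+1, forall p, p \in cs -> g p.1 = p.2)) => [[g Hg]|nc].
  have E : Ev N X cs = [set w | forall t, t \in map fst cs -> X t w = g t].
    apply/seteqP; split => w /=.
      by move=> H t /mapP [p pin ->]; rewrite (H p pin) Hg.
    by move=> H p pin; rewrite H ?Hg //; apply/mapP; exists p.
  by rewrite E -(hindX (map fst cs) ks g l kpos).
have E : Ev N X cs = set0.
  apply/seteqP; split => w // H; apply: nc; exists (fun t => X t w) => p pin.
  exact: H.
by rewrite E set0I Pr0 mul0r.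
Qed.

Lemma all_iota k : all (fun k => 0 < k)%N (iota 1 k).
Proof. by apply/allP => m; rewrite mem_iota => /andP[]. Qed.

Lemma all_iotaS k : all (fun k => 0 < k)%N (k.+1 :: iota 1 k).
Proof. by rewrite /= all_iota. Qed.

Lemma tau_split k l0 v :
  Pr mu (Tau T (k.+1 :: iota 1 k) (upd l0 k.+1 v))
  = Pr mu [set w | gap T k.+1 w = v] * Pr mu (Tau T (iota 1 k) l0).
Proof.
rewrite /Tau hindtau ?all_iotaS //; last by rewrite cons_uniq iota_uniq andbT; exact: notin_iota.
rewrite big_cons /upd eqxx hindtau ?all_iota ?iota_uniq //.
congr (_ * _); apply: eq_big_seq => m min.
by case: eqP => // mk; move: (notin_iota k); rewrite -mk min.
Qed.

Lemma coreC k l0 v cs :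
  Pr mu (Ev N X cs `&` Tau T (k.+1 :: iota 1 k) (upd l0 k.+1 v))
  = Pr mu [set w | gap T k.+1 w = v] * Pr mu (Ev N X cs `&` Tau T (iota 1 k) l0).
Proof.
by rewrite !indepEv ?all_iota ?all_iotaS // tau_split mulrCA.
Qed.

Lemma coreA k l0 l i j cs : (sT t0 l0 k, i) \in cs -> all (fun p => p.1 <= sT t0 l0 k)%N cs ->
  Pr mu (Ev N X (((sT t0 l0 k + l)%N, j) :: cs) `&` Tau T (k.+1 :: iota 1 k) (upd l0 k.+1 l))
  = ((M ^+ l) i j * Pr mu [set w | gap T k.+1 w = l]) * Pr mu (Ev N X cs `&` Tau T (iota 1 k) l0).
Proof.
move=> cin cle.
rewrite coreC !indepEv ?all_iota //.
rewrite (@multistep _ _ _ mu N X M measX hMC _ i j l cs) //.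
by rewrite !mulrA; congr (_ * _); rewrite mulrC mulrA.
Qed.

Lemma mobs k i : measurable [set w | obs X T k w = i].
Proof. exact: (@mcomp _ _ _ X (T k) i (fun t => measX t i) (measT k)). Qed.

Let TT : forall k l0 w m, Tau T (iota 1 k) l0 w -> (m <= k)%N -> T m w = sT t0 l0 m :=
  @TauT _ _ T t0 hT0 hTinc.

Lemma partC k i l :
  Pr mu ([set w | gap T k.+1 w = l] `&` [set w | obs X T k w = i])
  = Pr mu [set w | gap T 1%N w = l] * Pr mu [set w | obs X T k w = i].
Proof.
rewrite -(hidtau k.+1 l) //.
apply: (@Pr_lift _ _ _ mu _ (G T k)); first exact: Pr_ge0.
- by move=> x; apply: measurableI; [apply: measurableI; [exact: mgap|exact: mobs]|exact: mG].
- by move=> x; apply: measurableI; [exact: mobs|exact: mG].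
move=> x; case: (eqVneq (size x) k) => [sx|sx]; last first.
  by rewrite fib_nil // !setI0 Pr0 mulr0.
rewrite fib_tau //.
set s := sT t0 (lx x) k.
have e1 : [set w | gap T k.+1 w = l] `&` [set w | obs X T k w = i] `&` Tau T (iota 1 k) (lx x)
   = Ev N X [:: (s, i)] `&` Tau T (k.+1 :: iota 1 k) (upd (lx x) k.+1 l).
  apply/seteqP; split => w.
    move=> [[g ob] tw]; split.
      by move=> p; rewrite inE => /eqP -> /=; rewrite /s -(TT _ _ _ _ tw (leqnn k)).
    by apply/TauS; [exact: notin_iota | split].
  move=> [E /TauS [|g tw]]; first exact: notin_iota.
  split; [split|] => //.
  by move: (E (s, i) (mem_head _ _)); rewrite /= /obs /s -(TT _ _ _ _ tw (leqnn k)).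
have e2 : [set w | obs X T k w = i] `&` Tau T (iota 1 k) (lx x)
   = Ev N X [:: (s, i)] `&` Tau T (iota 1 k) (lx x).
  apply/seteqP; split => w.
    move=> [ob tw]; split; last by [].
    by move=> p; rewrite inE => /eqP -> /=; rewrite /s -(TT _ _ _ _ tw (leqnn k)).
  move=> [E tw]; split => //.
  by move: (E (s, i) (mem_head _ _)); rewrite /= /obs /s -(TT _ _ _ _ tw (leqnn k)).
by rewrite e1 e2 coreC.
Qed.

Lemma Mpow_ge0 n a b : 0 <= (M ^+ n) a b.
Proof.
case: hMC => [[Mge0 _] _].
elim: n a b => [|n IH] a b; first by rewrite expr0 mxE; case: eqP.
rewrite exprSr mxE; apply: sumr_ge0 => c _; exact: mulr_ge0.
Qed.

Lemma partB t t' k i j : (t < t')%N ->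
  Pr mu ([set w | X (T k.+1 w) w = j] `&`
         [set w | X (T k w) w = i /\ T k.+1 w = t' /\ T k w = t])
  = (M ^+ (t' - t)) i j * Pr mu [set w | X (T k w) w = i /\ T k.+1 w = t' /\ T k w = t].
Proof.
move=> tt'.
set C := [set w | X (T k w) w = i /\ _].
have mC : measurable C.
  have -> : C = [set w | obs X T k w = i] `&` ([set w | T k.+1 w = t'] `&` [set w | T k w = t]).
    by apply/seteqP; split => w.
  by apply: measurableI; [exact: mobs | apply: measurableI].
apply: (@Pr_lift _ _ _ mu _ (G T k.+1)); first exact: Mpow_ge0.
- by move=> x; apply: measurableI; [apply: measurableI; [exact: mobs|exact: mC]|exact: mG].
- by move=> x; apply: measurableI; [exact: mC|exact: mG].
move=> x; case: (eqVneq (size x) k.+1) => [sx|sx]; last first.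
  by rewrite fib_nil // !setI0 Pr0 mulr0.
rewrite fib_tau //.
set s := sT t0 (lx x) k; set s' := sT t0 (lx x) k.+1.
have [/andP[/eqP st /eqP st']|nb] := boolP ((s == t) && (s' == t')).
  have e1 : [set w | X (T k.+1 w) w = j] `&` C `&` Tau T (iota 1 k.+1) (lx x)
     = Ev N X [:: ((t + (t' - t))%N, j); (t, i)] `&` Tau T (iota 1 k.+1) (lx x).
    apply/seteqP; split => w.
      move=> [[xj [xi [e1 e2]]] tw]; split => //.
      move=> p; rewrite !inE => /orP[] /eqP -> /=; last by rewrite -e2.
      by rewrite subnKC ?(ltnW tt') // -e1.
    move=> [E tw].
    have e1 : T k w = t by rewrite -st /s (TT _ _ _ _ tw (leqnSn k)).
    have e2 : T k.+1 w = t' by rewrite -st' /s' (TT _ _ _ _ tw (leqnn k.+1)).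
    split => //; split; last first.
      split; [|split] => //.
      by move: (E (t, i)); rewrite !inE eqxx orbT e1 /=; apply.
    by rewrite /= e2 -{1}(subnKC (ltnW tt')); apply: (E ((t + (t' - t))%N, j)); rewrite !inE eqxx.
  have e2 : C `&` Tau T (iota 1 k.+1) (lx x)
     = Ev N X [:: (t, i)] `&` Tau T (iota 1 k.+1) (lx x).
    apply/seteqP; split => w.
      move=> [[xi [f1 f2]] tw]; split => //.
      by move=> p; rewrite !inE => /eqP -> /=; rewrite -f2.
    move=> [E tw].
    have f1 : T k w = t by rewrite -st /s (TT _ _ _ _ tw (leqnSn k)).
    have f2 : T k.+1 w = t' by rewrite -st' /s' (TT _ _ _ _ tw (leqnn k.+1)).
    split => //; split; [|split] => //.
    by move: (E (t, i)); rewrite !inE eqxx f1 /=; apply.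
  rewrite e1 e2 !indepEv ?all_iota //.
  rewrite (@multistep _ _ _ mu N X M measX hMC t i j (t' - t) [:: (t, i)]) ?mem_head //=.
    by rewrite -mulrA mulrCA.
  by rewrite leqnn.
have e0 : C `&` Tau T (iota 1 k.+1) (lx x) = set0.
  apply/seteqP; split => w // [[xi [e1 e2]] tw]; move: nb.
  rewrite /s /s' -(TT _ _ _ _ tw (leqnSn k)) -(TT _ _ _ _ tw (leqnn k.+1)) e1 e2.
  by rewrite !eqxx.
by rewrite -setIA e0 setI0 Pr0 mulr0.
Qed.

Let TSw : forall k w, T k.+1 w = (T k w + gap T k.+1 w)%N := @TS _ _ T hTinc.

Definition Cset k (h : nat -> 'I_N.+1) (l' : nat -> nat) (i : 'I_N.+1) : set Omega :=
  [set w | obs X T k w = i /\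
           (forall m, (1 <= m < k)%N -> obs X T m w = h m) /\
           (forall m, (1 <= m <= k)%N -> gap T m w = l' m)].
Definition Aset k (j : 'I_N.+1) (l : nat) : set Omega := [set w | obs X T k.+1 w = j /\ gap T k.+1 w = l].

Lemma Cset_eq k h l' i : (1 <= k)%N ->
  Cset k h l' i = Ev N X ((sT t0 l' k, i) :: [seq (sT t0 l' m, h m) | m <- iota 1 k.-1])
                  `&` Tau T (iota 1 k) l'.
Proof.
move=> k1; apply/seteqP; split => w.
  move=> [oi [oh g]].
  have tw : Tau T (iota 1 k) l' w.
    move=> m; rewrite mem_iota add1n ltnS => mk; exact: g.
  split => //.
  move=> p; rewrite in_cons => /orP[/eqP -> /=|/mapP [m min ->] /=].
    by rewrite -(TT _ _ _ _ tw (leqnn k)).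
  move: min; rewrite mem_iota add1n prednK // => /andP[m1 mk].
  rewrite -(TT _ _ _ _ tw (ltnW mk)); apply: oh; by rewrite m1.
move=> [E tw]; split; last split.
- by move: (E _ (mem_head _ _)); rewrite /= /obs (TT _ _ _ _ tw (leqnn k)).
- move=> m /andP[m1 mk]; rewrite /obs (TT _ _ _ _ tw (ltnW mk)).
  apply: (E (sT t0 l' m, h m)); rewrite in_cons; apply/orP; right.
  by apply/mapP; exists m => //; rewrite mem_iota m1 add1n prednK.
- by move=> m /andP[m1 mk]; apply: tw; rewrite mem_iota m1 add1n ltnS.
Qed.

Lemma partA1 k h l' i j l : (1 <= k)%N ->
  Pr mu (Aset k j l `&` Cset k h l' i)
  = ((M ^+ l) i j * Pr mu [set w | gap T k.+1 w = l]) * Pr mu (Cset k h l' i).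
Proof.
move=> k1; rewrite Cset_eq //.
set cs0 := (_ :: _).
have -> : Aset k j l `&` (Ev N X cs0 `&` Tau T (iota 1 k) l')
   = Ev N X (((sT t0 l' k + l)%N, j) :: cs0) `&` Tau T (k.+1 :: iota 1 k) (upd l' k.+1 l).
  apply/seteqP; split => w.
    move=> [[oj g] [E tw]]; split; last by apply/TauS; [exact: notin_iota | split].
    move=> p; rewrite in_cons => /orP[/eqP -> /=|]; last exact: E.
    by rewrite -g -(TT _ _ _ _ tw (leqnn k)) -TSw.
  move=> [E /TauS [|g tw]]; first exact: notin_iota.
  split; last by split => // p pin; apply: E; rewrite in_cons pin orbT.
  split => //.
  by move: (E _ (mem_head _ _)); rewrite /= /obs TSw g (TT _ _ _ _ tw (leqnn k)).
rewrite (coreA _ _ _ i) ?mem_head //.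
rewrite /= leqnn /=; apply/allP => p /mapP [m]; rewrite mem_iota add1n prednK // => /andP[_ mk] -> /=.
exact: sT_mono (ltnW mk).
Qed.

Lemma partA2 k i j l :
  Pr mu (Aset k j l `&` [set w | obs X T k w = i])
  = ((M ^+ l) i j * Pr mu [set w | gap T k.+1 w = l]) * Pr mu [set w | obs X T k w = i].
Proof.
apply: (@Pr_lift _ _ _ mu _ (G T k)).
- by apply: mulr_ge0; [exact: Mpow_ge0 | exact: Pr_ge0].
- move=> x; apply: measurableI; last exact: mG.
  apply: measurableI; last exact: mobs.
  by apply: measurableI; [exact: mobs | exact: mgap].
- by move=> x; apply: measurableI; [exact: mobs|exact: mG].
move=> x; case: (eqVneq (size x) k) => [sx|sx]; last first.
  by rewrite fib_nil // !setI0 Pr0 mulr0.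
rewrite fib_tau //.
set s := sT t0 (lx x) k.
have e1 : Aset k j l `&` [set w | obs X T k w = i] `&` Tau T (iota 1 k) (lx x)
   = Ev N X [:: ((s + l)%N, j); (s, i)] `&` Tau T (k.+1 :: iota 1 k) (upd (lx x) k.+1 l).
  apply/seteqP; split => w.
    move=> [[[oj g] ob] tw]; split; last by apply/TauS; [exact: notin_iota | split].
    move=> p; rewrite !inE => /orP[] /eqP -> /=.
      by rewrite /s -g -(TT _ _ _ _ tw (leqnn k)) -TSw.
    by rewrite /s -(TT _ _ _ _ tw (leqnn k)).
  move=> [E /TauS [|g tw]]; first exact: notin_iota.
  split => //; split; last by move: (E (s, i)); rewrite !inE eqxx orbT /= /obs /s (TT _ _ _ _ tw (leqnn k)); apply.
  split => //.
  by move: (E ((s + l)%N, j)); rewrite !inE eqxx /= /obs TSw g /s (TT _ _ _ _ tw (leqnn k)); apply.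
have e2 : [set w | obs X T k w = i] `&` Tau T (iota 1 k) (lx x)
   = Ev N X [:: (s, i)] `&` Tau T (iota 1 k) (lx x).
  apply/seteqP; split => w.
    move=> [ob tw]; split; last by [].
    by move=> p; rewrite inE => /eqP -> /=; rewrite /s -(TT _ _ _ _ tw (leqnn k)).
  move=> [E tw]; split => //.
  by move: (E (s, i) (mem_head _ _)); rewrite /= /obs /s -(TT _ _ _ _ tw (leqnn k)).
by rewrite e1 e2 (coreA _ _ _ i) ?mem_head //= leqnn.
Qed.

End Indep.

Local Open Scope classical_set_scope.
Local Open Scope ring_scope.

Theorem lemma1 (R : realType) (d : measure_display) (Omega : measurableType d)
  (Zt : Type) (Pz : Zt -> probability Omega R)
  (N : nat) (X : nat -> Omega -> 'I_N.+1) (P : Zt -> 'M[R]_N.+1)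
  (T : nat -> Omega -> nat) (t0 : nat)
  (measX : forall t i, measurable [set w | X t w = i])
  (measT : forall k t, measurable [set w | T k w = t])
  (hMC : forall z, hom_markov_chain (Pz z) X (P z))
  (hirr : forall z, irreducible_mx (P z))
  (haper : forall z, aperiodic_mx (P z))
  (hT0 : forall w, T 0%N w = t0)
  (hTinc : forall k w, (T k w < T k.+1 w)%N)
  (hindX : forall z, indep_gaps_process (Pz z) X (gap T))
  (hindtau : forall z, mutually_indep_gaps (Pz z) (gap T))
  (hidtau : forall z, ident_distr_gaps (Pz z) (gap T)) :
  (* (a) *)
  (forall (z : Zt) (k : nat) (h : nat -> 'I_N.+1) (l' : nat -> nat)
          (i j : 'I_N.+1) (l : nat),
     (1 <= k)%N -> (forall m, (1 <= m <= k)%N -> (0 < l' m)%N) -> (0 < l)%N ->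
     let C := [set w | obs X T k w = i /\
                       (forall m, (1 <= m < k)%N -> obs X T m w = h m) /\
                       (forall m, (1 <= m <= k)%N -> gap T m w = l' m)] in
     0 < Pr (Pz z) C ->
     cprob (Pz z) [set w | obs X T k.+1 w = j /\ gap T k.+1 w = l] C
     = cprob (Pz z) [set w | obs X T k.+1 w = j /\ gap T k.+1 w = l]
                    [set w | obs X T k w = i]) /\
  (* (b) *)
  (forall (z : Zt) (t t' k : nat) (i j : 'I_N.+1),
     (t < t')%N ->
     let C := [set w | X (T k w) w = i /\ T k.+1 w = t' /\ T k w = t] in
     0 < Pr (Pz z) C ->
     cprob (Pz z) [set w | X (T k.+1 w) w = j] C = (P z ^+ (t' - t)) i j) /\
  (* (c) *)
  (forall (z : Zt) (k k' : nat) (i : 'I_N.+1) (l : nat),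
     0 < Pr (Pz z) [set w | obs X T k w = i] ->
     0 < Pr (Pz z) [set w | obs X T k' w = i] ->
     cprob (Pz z) [set w | gap T k.+1 w = l] [set w | obs X T k w = i]
     = cprob (Pz z) [set w | gap T k'.+1 w = l] [set w | obs X T k' w = i]).
Proof.
have cpc : forall (mu : probability Omega R) A C c, 0 < Pr mu C ->
    Pr mu (A `&` C) = c * Pr mu C -> cprob mu A C = c.
  by move=> mu A C c Cp E; rewrite /cprob E mulfK // gt_eqF.
split; [|split].
- move=> z k h l' i j l k1 _ _ C Cpos.
  have mC : measurable C.
    have -> : C = Cset N X T k h l' i by [].
    rewrite (Cset_eq N X T t0 hT0 hTinc) //; apply: measurableI; [exact: (mEv N X measX) | exact: (mTau T measT)].
  have Bpos : 0 < Pr (Pz z) [set w | obs X T k w = i].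
    apply: lt_le_trans Cpos _; apply: Pr_le => //; last by move=> w [].
    exact: (mobs N X T measX measT).
  rewrite (cpc _ _ _ _ Cpos (@partA1 _ _ _ (Pz z) N X (P z) T t0 measX (hMC z) hT0 hTinc (hindX z) (hindtau z) k h l' i j l k1)).
  by rewrite (cpc _ _ _ _ Bpos (@partA2 _ _ _ (Pz z) N X (P z) T t0 measX measT (hMC z) hT0 hTinc (hindX z) (hindtau z) k i j l)).
- move=> z t t' k i j tt' C Cpos.
  exact: (cpc _ _ _ _ Cpos (@partB _ _ _ (Pz z) N X (P z) T t0 measX measT (hMC z) hT0 hTinc (hindX z) t t' k i j tt')).
- move=> z k k' i l P1 P2.
  rewrite (cpc _ _ _ _ P1 (@partC _ _ _ (Pz z) N X T t0 measX measT hT0 hTinc (hindX z) (hindtau z) (hidtau z) k i l)).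
  by rewrite (cpc _ _ _ _ P2 (@partC _ _ _ (Pz z) N X T t0 measX measT hT0 hTinc (hindX z) (hindtau z) (hidtau z) k' i l)).
Qed.
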